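(* Let $M$ be a non-negative $n\times n$ matrix having at least one positive diagonal, and for $\lambda>0$ let $M^{(\lambda)}$ be the limit of Sinkhorn scaling of $M^{[\lambda]}$ with uniform marginals $\mathbf{r}=\mathbf{c}=(1/n,\dots,1/n)$. Then $M^{(\lambda)}$ concentrates on the leading diagonals of $M$ as $\lambda\to\infty$: for every position $(s,t)$ such that $M_{st}$ does not lie on any leading diagonal of $M$ (i.e. there is no leading diagonal $D^M_\sigma$ with $\sigma(s)=t$), $M^{(\lambda)}_{st}\to0$ as $\lambda\to\infty$.
   Context: $M^{[\lambda]}$ denotes the matrix with entries $(M_{ij})^\lambda$ (zero where $M_{ij}=0$). Sinkhorn scaling with marginals $(\mathbf{r},\mathbf{c})$ is the iterated alternation of rescaling rows to have sums $\mathbf{r}$ and columns to have sums $\mathbf{c}$. For a permutation $\sigma$ of $\{1,\dots,n\}$, the diagonal of $M$ determined by $\sigma$ is $D^M_\sigma=\{M_{1\sigma(1)},\dots,M_{n\sigma(n)}\}$; it is positive if all its entries are positive; it is a leading diagonal if the product $\prod_{i=1}^n M_{i\sigma(i)}$ is the largest among all diagonals of $M$. *)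

(* Defs.v *)
From HB Require Import structures.
From mathcomp Require Import all_boot all_order all_algebra all_fingroup.
From mathcomp Require Import all_classical all_reals all_analysis.
Set Implicit Arguments. Unset Strict Implicit. Unset Printing Implicit Defensive.
Import Order.TTheory GRing.Theory Num.Theory numFieldNormedType.Exports.
Local Open Scope classical_set_scope.
Local Open Scope ring_scope.

Section Sinkhorn.
Variables (R : realType) (n : nat).

Definition entry_pow (lam : R) (M : 'M[R]_n) : 'M[R]_n :=
  \matrix_(i, j) (if M i j == 0 then 0 else powR (M i j) lam).

Definition row_scale (r : 'I_n -> R) (A : 'M[R]_n) : 'M[R]_n :=
  \matrix_(i, j) (A i j * r i / \sum_(k < n) A i k).

Definition col_scale (c : 'I_n -> R) (A : 'M[R]_n) : 'M[R]_n :=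
  \matrix_(i, j) (A i j * c j / \sum_(k < n) A k j).

(* Sinkhorn iterates: S_0 = A, S_1 = rows rescaled, S_2 = columns rescaled, ... *)
Fixpoint sinkhorn_iter (r c : 'I_n -> R) (A : 'M[R]_n) (k : nat) : 'M[R]_n :=
  match k with
  | 0 => A
  | k'.+1 => if odd k' then col_scale c (sinkhorn_iter r c A k')
             else row_scale r (sinkhorn_iter r c A k')
  end.

Definition sinkhorn_limit (r c : 'I_n -> R) (A L : 'M[R]_n) : Prop :=
  forall i j, (fun k => sinkhorn_iter r c A k i j) @ \oo --> L i j.

Definition uniform_marg : 'I_n -> R := fun _ => n%:R^-1.

Definition diag_prod (M : 'M[R]_n) (s : 'S_n) : R := \prod_(i < n) M i (s i).

Definition positive_diagonal (M : 'M[R]_n) (s : 'S_n) : Prop :=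
  forall i, 0 < M i (s i).

Definition leading_diagonal (M : 'M[R]_n) (s : 'S_n) : Prop :=
  forall s' : 'S_n, diag_prod M s' <= diag_prod M s.

End Sinkhorn.

(* Main.v *)
Require Import Defs.
From HB Require Import structures.
From mathcomp Require Import all_boot all_order all_algebra all_fingroup.
From mathcomp Require Import ring lra zify.
Set Implicit Arguments. Unset Strict Implicit. Unset Printing Implicit Defensive.
Import Order.TTheory GRing.Theory Num.Theory.

Section HallS.
Variables (X Y : finType) (r : X -> Y -> bool) (y0 : Y).

Definition nbh (B : {set Y}) (S : {set X}) : {set Y} :=
  [set y in B | [exists x in S, r x y]].

Lemma nbhP (B : {set Y}) (S : {set X}) y : reflect (y \in B /\ exists2 x, x \in S & r x y) (y \in nbh B S).
Proof.
rewrite inE; apply: (iffP andP) => [[yB /existsP [x /andP [xS rxy]]]|[yB [x xS rxy]]].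
  by split => //; exists x.
by split => //; apply/existsP; exists x; rewrite xS.
Qed.

Lemma hall_gen m (A : {set X}) (B : {set Y}) : #|A| <= m ->
  (forall S : {set X}, S \subset A -> #|S| <= #|nbh B S|) ->
  exists f : X -> Y, {in A &, injective f} /\
     (forall x, x \in A -> f x \in B /\ r x (f x)).
Proof.
elim: m A B => [|m IH] A B hA hH.
  have A0 : A = set0 by apply: cards0_eq; lia.
  by exists (fun _ => y0); split => [x|x]; rewrite A0 inE.
case: (boolP [exists S : {set X},
   [&& S \subset A, S != set0, S != A & #|nbh B S| == #|S|]]).
  move/existsP=> [S /and4P [sSA nS0 nSA /eqP eqS]].
  have SA : S \proper A by rewrite properEneq nSA.
  have ltS : #|S| <= m by have := proper_card SA; lia.
  have [f1 [inj1 P1]] := IH S B ltS (fun T sT => hH T (subset_trans sT sSA)).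
  have S0 : 0 < #|S| by rewrite card_gt0.
  have lt2 : #|A :\: S| <= m.
    by rewrite cardsD (setIidPr sSA); lia.
  have H2 : forall T : {set X}, T \subset A :\: S -> #|T| <= #|nbh (B :\: nbh B S) T|.
    move=> T sT.
    have dTS : [disjoint T & S].
      apply/pred0P => x /=; apply/negbTE/negP => /andP [xT xS].
      by have := subsetP sT x xT; rewrite inE xS.
    have := hH (T :|: S); rewrite subUset sSA (subset_trans sT (subsetDl _ _)).
    move=> /(_ isT); rewrite cardsU (disjoint_setI0 dTS) cards0 subn0 => h1.
    have sub : nbh B (T :|: S) :\: nbh B S \subset nbh (B :\: nbh B S) T.
      apply/subsetP => y; rewrite inE => /andP [yS /nbhP [yB [x]]].
      rewrite inE => /orP [xT|xS] rxy.
        by apply/nbhP; split; [rewrite inE yS yB| exists x].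
      by move: yS; case/negP; apply/nbhP; split => //; exists x.
    have := subset_leq_card sub; rewrite cardsD.
    have := subset_leq_card (subsetIr (nbh B (T :|: S)) (nbh B S)).
    lia.
  have [f2 [inj2 P2]] := IH _ _ lt2 H2.
  exists (fun x => if x \in S then f1 x else f2 x); split.
    move=> x x' xA x'A /=.
    have nS : forall z, z \in A -> z \notin S -> f2 z \notin nbh B S.
      move=> z zA zS; have [] := P2 z; first by rewrite inE zS zA.
      by rewrite inE => /andP [].
    have iS : forall z, z \in S -> f1 z \in nbh B S.
      move=> z zS; have [zB rz] := P1 z zS; apply/nbhP; split => //; by exists z.
    case: ifP => xS; case: ifP => x'S.
    - exact: inj1.
    - move=> e; have := nS x' x'A (negbT x'S); by rewrite -e iS.
    - move=> e; have := nS x xA (negbT xS); by rewrite e iS.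
    - by apply: inj2; rewrite inE ?xS ?x'S ?xA ?x'A.
  move=> x xA; case: ifP => xS; first exact: P1.
  have [] := P2 x; first by rewrite inE xS xA.
  by rewrite inE => /andP [].
rewrite negb_exists => /forallP notight.
case: (set_0Vmem A) => [A0|[x0 x0A]].
  by exists (fun _ => y0); split => [x|x]; rewrite A0 inE.
have := hH [set x0]; rewrite sub1set x0A cards1 => /(_ isT); rewrite card_gt0.
case/set0Pn => y1 /nbhP [y1B [x1]]; rewrite inE => /eqP e1 rxy1; subst x1.
have lt2 : #|A :\ x0| <= m by move: hA; rewrite (cardsD1 x0 A) x0A; lia.
have H2 : forall T : {set X}, T \subset A :\ x0 -> #|T| <= #|nbh (B :\ y1) T|.
  move=> T sT; case: (eqVneq T set0) => [->|nT0]; first by rewrite cards0.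
  have sTA : T \subset A by apply: subset_trans sT (subsetDl _ _).
  have nTA : T != A.
    apply/eqP => TA; have := subsetP sT x0; rewrite TA x0A !inE eqxx.
    by move=> /(_ isT).
  have := notight T; rewrite sTA nT0 nTA /= => hne.
  have hle := hH T sTA.
  have hlt : #|T| < #|nbh B T| by rewrite ltn_neqAle eq_sym hne hle.
  have -> : nbh (B :\ y1) T = nbh B T :\ y1.
    apply/setP => y; rewrite !inE; case: (y == y1) => //=.
  move: hlt; rewrite (cardsD1 y1 (nbh B T)); case: (y1 \in nbh B T) => /=; lia.
have [f2 [inj2 P2]] := IH _ _ lt2 H2.
exists (fun x => if x == x0 then y1 else f2 x); split.
  move=> x x' xA x'A /=.
  have nS : forall z, z \in A -> z != x0 -> f2 z != y1.
    move=> z zA zS; have [] := P2 z; first by rewrite !inE zS zA.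
    by rewrite !inE => /andP [].
  case: eqP => [->|xn]; case: eqP => [->|x'n] //.
  - move=> e; have := nS x' x'A (introN eqP x'n); by rewrite -e eqxx.
  - move=> e; have := nS x xA (introN eqP xn); by rewrite e eqxx.
  - by apply: inj2; rewrite !inE ?xA ?x'A andbT; apply/eqP.
move=> x xA; case: eqP => [->|xn]; first by [].
have [] := P2 x; first by rewrite !inE xA andbT; apply/eqP.
by rewrite !inE => /andP [].
Qed.

End HallS.

Section MatchSec.
Local Open Scope ring_scope.

Lemma sum_sub_le (R : realFieldType) n (F : 'I_n -> R) (P : pred 'I_n) :
  (forall i, 0 <= F i) -> \sum_(i | P i) F i <= \sum_i F i.
Proof.
move=> F0; rewrite big_mkcond /=; apply: ler_sum => i _.
by case: (P i).
Qed.

Lemma diag_match (R : realFieldType) n (B : 'M[R]_n) c s t :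
  (forall i j, 0 <= B i j) ->
  (forall i, \sum_j B i j = c) -> (forall j, \sum_i B i j = c) ->
  0 < B s t ->
  exists p : 'S_n, p s = t /\
    forall i, B s t / (n * n + 1)%:R <= B i (p i).
Proof.
move=> B0 rows cols xpos.
set x := B s t in xpos *; set e := x / (n * n + 1)%:R.
have np : 0 < (n * n + 1)%:R :> R by rewrite ltr0n; lia.
have epos : 0 < e by rewrite divr_gt0.
have ex : e <= x.
  rewrite /e ler_pdivrMr // ler_peMr ?(ltW xpos) //.
  by rewrite ler1n; lia.
have exlt : e * (n * n)%:R < x.
  rewrite /e mulrAC ltr_pdivrMr //.
  by rewrite ltr_pM2l // ltr_nat; lia.
set r := fun i j => e <= B i j.
have hall := @hall_gen _ _ r t #|[set~ s]| [set~ s] [set~ t] (leqnn _).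
case: hall => [S sS|f [finj fP]].
  rewrite leqNgt; apply/negP => ltN.
  set N := nbh r [set~ t] S in ltN.
  have c0 : 0 <= c by rewrite -(cols t); apply: sumr_ge0.
  set F := fun j => \sum_(i in S) B i j.
  have Fc : forall j, F j <= c.
    by move=> j; rewrite -(cols j); apply: sum_sub_le.
  have tN : t \notin N by rewrite inE !inE eqxx.
  have Ft : F t <= c - x.
    rewrite lerBrDr -(cols t) (bigD1 s) //= addrC lerD2r.
    rewrite /F big_mkcond /= [X in _ <= X]big_mkcond /=; apply: ler_sum => i _.
    case: ifP => iS; last by case: ifP.
    by have := subsetP sS i iS; rewrite !inE => ->.
  have Fo : forall j, j \notin N -> j != t -> F j <= e *+ n.
    move=> j jN jt; apply: le_trans (_ : \sum_(i in S) e <= _).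
      apply: ler_sum => i iS; apply: ltW; rewrite ltNge; apply/negP => eB.
      by move: jN; case/negP; apply/nbhP; split; [rewrite !inE | exists i].
    rewrite sumr_const; apply: (ler_wpMn2l (ltW epos)).
    by rewrite -[X in (_ <= X)%N](card_ord n); apply: max_card.
  have tot : c *+ #|S| = \sum_j F j.
    rewrite /F exchange_big /= -sumr_const; apply: eq_bigr => i _.
    by rewrite rows.
  move: tot; rewrite (bigID (fun j => j \in N)) /= [X in _ + X](bigD1 t) //=.
  have h1 : \sum_(j in N) F j <= c *+ #|N|.
    rewrite -sumr_const; exact: ler_sum.
  have h2 : \sum_(j | (j \notin N) && (j != t)) F j <= (e *+ n) *+ n.
    apply: le_trans (_ : \sum_(j | (j \notin N) && (j != t)) e *+ n <= _).
      by apply: ler_sum => j /andP [jN jt]; apply: Fo.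
    apply: le_trans (_ : \sum_(j : 'I_n) e *+ n <= _).
      by apply: sum_sub_le => j; rewrite mulrn_wge0 // ltW.
    by rewrite sumr_const card_ord.
  move=> tot.
  have h3 : c *+ #|S| <= c *+ #|N| + (c - x) + e *+ n *+ n.
    by rewrite tot addrA; apply: lerD => //; apply: lerD.
  have h4 : c *+ #|N| + c <= c *+ #|S|.
    by rewrite -mulrSr; apply: (ler_wpMn2l c0).
  have : x <= e * (n * n)%:R.
    rewrite -mulrnA -mulr_natr in h3.
    by move: h3 h4; lra.
  by rewrite leNgt exlt.
pose g i := if i == s then t else f i.
have ginj : injective g.
  have fA : forall i, i != s -> f i != t.
    move=> i si; have [] := fP i; first by rewrite !inE.
    by rewrite !inE.
  move=> i j; rewrite /g; case: eqP => [->|ni]; case: eqP => [->|js] //.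
  - by move=> e1; have := fA j (introN eqP js); rewrite -e1 eqxx.
  - by move=> e1; have := fA i (introN eqP ni); rewrite e1 eqxx.
  - by apply: finj; rewrite !inE; apply/eqP.
exists (perm ginj); split; first by rewrite permE /g eqxx.
move=> i; rewrite permE /g; case: eqP => [->|ni] //.
by have [] := fP i; first by rewrite !inE; apply/eqP.
Qed.

End MatchSec.

From mathcomp Require Import all_classical all_reals all_analysis.
Import Order.TTheory GRing.Theory Num.Theory numFieldNormedType.Exports.
Local Open Scope classical_set_scope.
Local Open Scope ring_scope.

Section SinkLemmas.
Variables (R : realType) (n : nat) (r c : 'I_n -> R) (A : 'M[R]_n).
Hypothesis A0 : forall i j, 0 <= A i j.
Hypothesis r0 : forall i, 0 < r i.
Hypothesis c0 : forall j, 0 < c j.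

Local Notation S := (sinkhorn_iter r c A).

Lemma sink_ge0 k i j : 0 <= S k i j.
Proof.
elim: k i j => [|k IH] i j /=; first exact: A0.
case: ifP => _; rewrite mxE; (apply: divr_ge0;
  [apply: mulr_ge0; [exact: IH | exact: ltW] | apply: sumr_ge0 => l _; exact: IH]).
Qed.

Lemma sum_gt0_of (F : 'I_n -> R) j : (forall i, 0 <= F i) -> 0 < F j ->
  0 < \sum_i F i.
Proof.
move=> F0 Fj; rewrite (bigD1 j) //=; apply: lt_le_trans Fj _.
by rewrite lerDl; apply: sumr_ge0.
Qed.

Variable s0 : 'S_n.
Hypothesis As0 : forall i, 0 < A i (s0 i).

Lemma sink_gt0 k i : 0 < S k i (s0 i).
Proof.
elim: k i => [|k IH] i /=; first exact: As0.
case: ifP => _; rewrite mxE; apply: divr_gt0; rewrite ?mulr_gt0 //.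
  exact: (sum_gt0_of (fun l => sink_ge0 k l (s0 i)) (IH i)).
exact: (sum_gt0_of (fun l => sink_ge0 k i l) (IH i)).
Qed.

Lemma sink_row_gt0 k i : 0 < \sum_j S k i j.
Proof. exact: (sum_gt0_of (fun l => sink_ge0 k i l) (sink_gt0 k i)). Qed.

Lemma sink_col_gt0 k j : 0 < \sum_i S k i j.
Proof.
have := sum_gt0_of (fun l => sink_ge0 k l (s0 ((s0^-1)%g j))) (sink_gt0 k ((s0^-1)%g j)).
by rewrite permKV.
Qed.

Lemma sink_rowsum k i : ~~ odd k -> \sum_j S k.+1 i j = r i.
Proof.
move=> ok /=; rewrite (negbTE ok).
under eq_bigr do rewrite mxE mulrAC.
rewrite -!mulr_suml mulfV ?mul1r //; exact: lt0r_neq0 (sink_row_gt0 k i).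
Qed.

Lemma sink_colsum k j : odd k -> \sum_i S k.+1 i j = c j.
Proof.
move=> ok /=; rewrite ok.
under eq_bigr do rewrite mxE mulrAC.
rewrite -!mulr_suml mulfV ?mul1r //; exact: lt0r_neq0 (sink_col_gt0 k j).
Qed.

Lemma sink_diag k (sg tau : 'S_n) :
  diag_prod (S k) sg * diag_prod A tau = diag_prod (S k) tau * diag_prod A sg.
Proof.
elim: k => [|k IH] /=; first by rewrite mulrC.
have rowf : forall X (p : 'S_n), diag_prod (row_scale r X) p =
    diag_prod X p * \prod_i (r i / \sum_l X i l).
  move=> X p; rewrite /diag_prod -big_split /=; apply: eq_bigr => i _.
  by rewrite mxE mulrA.
have colf : forall X (p : 'S_n), diag_prod (col_scale c X) p =
    diag_prod X p * \prod_j (c j / \sum_l X l j).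
  move=> X p; rewrite (reindex_inj (@perm_inj _ p)) /diag_prod -big_split /=.
  by apply: eq_bigr => i _; rewrite mxE mulrA.
case: ifP => _; rewrite ?rowf ?colf.
  by rewrite mulrAC IH mulrAC.
by rewrite mulrAC IH mulrAC.
Qed.

End SinkLemmas.

Lemma cvg_eq_freq (R : realType) (u : nat -> R) l a : u @ \oo --> l ->
  (forall N, exists2 k, (N <= k)%N & u k = a) -> l = a.
Proof.
move=> cu fr; apply/eqP; apply/negPn/negP => nla.
have ep : 0 < `|l - a| by rewrite normr_gt0 subr_eq0.
move/cvgr_dist_lt: cu => /(_ _ ep) [N _ HN].
have [k kN uk] := fr N.
by have := HN k kN; rewrite /= uk ltxx.
Qed.

Lemma cvg_ge0_all (R : realType) (u : nat -> R) l : u @ \oo --> l ->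
  (forall k, 0 <= u k) -> 0 <= l.
Proof.
move=> cu u0; rewrite leNgt; apply/negP => l0.
have ep : 0 < - l by rewrite oppr_gt0.
move/cvgr_dist_lt: cu => /(_ _ ep) [N _ HN].
have := HN N (leqnn N); rewrite /=.
have := u0 N; have := ler_norm (l - u N).
move=> h1 h2 h3.
have : `|l - u N| >= u N - l by rewrite distrC; apply: ler_norm.
lra.
Qed.


Lemma limit_facts (R : realType) n (A L : 'M[R]_n) (s0 : 'S_n) :
  (forall i j, 0 <= A i j) -> (forall i, 0 < A i (s0 i)) -> (0 < n)%N ->
  sinkhorn_limit (@uniform_marg R n) (@uniform_marg R n) A L ->
  [/\ forall i j, 0 <= L i j, forall i, \sum_j L i j = n%:R^-1,
      forall j, \sum_i L i j = n%:R^-1 &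
      forall p q : 'S_n, diag_prod L p * diag_prod A q = diag_prod L q * diag_prod A p].
Proof.
move=> A0 As0 n0 HL.
set u := @uniform_marg R n.
have u0 : forall i, 0 < u i by move=> i; rewrite /u /uniform_marg invr_gt0 ltr0n.
split.
- move=> i j; apply: cvg_ge0_all (HL i j) _ => k.
  exact: sink_ge0.
- move=> i; apply: (@cvg_eq_freq _ (fun k => \sum_j sinkhorn_iter u u A k i j)).
    apply: (@cvg_big R 'I_n +%R 0 xpredT add_continuous nat \oo (index_enum _)
      (fun j k => sinkhorn_iter u u A k i j) (fun j => L i j)) => // j _.
  move=> N; exists (N.*2).+1; first by rewrite -addnn; lia.
  by rewrite (@sink_rowsum _ _ _ _ _ A0 u0 u0 s0 As0) // odd_double.
- move=> j; apply: (@cvg_eq_freq _ (fun k => \sum_i sinkhorn_iter u u A k i j)).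
    apply: (@cvg_big R 'I_n +%R 0 xpredT add_continuous nat \oo (index_enum _)
      (fun i k => sinkhorn_iter u u A k i j) (fun i => L i j)) => // i _.
  move=> N; exists (N.*2).+2; first by rewrite -addnn; lia.
  by rewrite (@sink_colsum _ _ _ _ _ A0 u0 u0 s0 As0) //= odd_double.
- move=> p q; apply/eqP; rewrite -subr_eq0; apply/eqP.
  apply: (@cvg_eq_freq _ (fun k => diag_prod (sinkhorn_iter u u A k) p * diag_prod A q -
     diag_prod (sinkhorn_iter u u A k) q * diag_prod A p)).
    apply: cvgB; apply: cvgM; try exact: cvg_cst.
      apply: (@cvg_big R 'I_n *%R 1 xpredT mul_continuous nat \oo (index_enum _)
        (fun i k => sinkhorn_iter u u A k i (p i)) (fun i => L i (p i))) => // i _.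
    apply: (@cvg_big R 'I_n *%R 1 xpredT mul_continuous nat \oo (index_enum _)
      (fun i k => sinkhorn_iter u u A k i (q i)) (fun i => L i (q i))) => // i _.
  by move=> N; exists N => //; rewrite sink_diag subrr.
Qed.


Lemma entry_powE (R : realType) n (M : 'M[R]_n) lam : 0 < lam ->
  forall i j, entry_pow lam M i j = powR (M i j) lam.
Proof.
move=> l0 i j; rewrite mxE; case: eqP => // ->.
by rewrite powR0 // gt_eqF.
Qed.

Lemma diag_powR (R : realType) n (M : 'M[R]_n) lam (p : 'S_n) :
  (forall i j, 0 <= M i j) -> 0 < lam ->
  diag_prod (entry_pow lam M) p = powR (diag_prod M p) lam.
Proof.
move=> M0 l0; rewrite /diag_prod.
under eq_bigr do rewrite entry_powE //.
suff : 0 <= \prod_i M i (p i) /\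
  \prod_i powR (M i (p i)) lam = powR (\prod_i M i (p i)) lam by case.
apply: (big_ind2 (fun a b => 0 <= b /\ a = powR b lam)) => //.
- by rewrite powR1.
- move=> x1 x2 y1 y2 [h1 ->] [h2 ->]; split; first exact: mulr_ge0.
  by rewrite powRM.
Qed.
  
Lemma term_cvg (R : realType) (b P : R) : 0 <= b -> b < P ->
  (fun lam => powR b lam / powR P lam) @ +oo --> (0 : R).
Proof.
move=> b0 bP; have P0 : 0 < P by apply: le_lt_trans bP.
apply/cvgrPdist_lt => eps eps0.
case: (eqVneq b 0) => [->|bn0].
  apply: filterS (nbhs_pinfty_gt (real0 _)) => lam /= l0.
  by rewrite powR0 ?gt_eqF // mul0r subr0 normr0.
have bpos : 0 < b by rewrite lt_def bn0.
set d := ln b - ln P.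
have d0 : d < 0 by rewrite /d subr_lt0 ltr_ln.
have rr : ln eps / d \is Num.real by apply: num_real.
apply: filterS (nbhs_pinfty_gt rr) => lam /= hl.
rewrite sub0r normrN /powR !gt_eqF // -expRB -mulrBr.
rewrite ger0_norm ?expR_ge0 //.
rewrite -[X in _ < X](lnK (x := eps)) ?posrE // ltr_expR.
by rewrite -/d -(ltr_ndivrMr _ _ d0).
Qed.

Unset Implicit Arguments.

Theorem proposition5 (R : realType) (n : nat) (M : 'M[R]_n)
  (Mlim : R -> 'M[R]_n) :
  (forall i j, 0 <= M i j) ->
  (exists s : 'S_n, positive_diagonal M s) ->
  (forall lam : R, 0 < lam ->
     sinkhorn_limit (@uniform_marg R n) (@uniform_marg R n)
       (entry_pow lam M) (Mlim lam)) ->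
  forall s t : 'I_n,
    ~ (exists sg : 'S_n, leading_diagonal M sg /\ sg s = t) ->
    (fun lam => Mlim lam s t) @ +oo --> (0 : R).
Proof.
move=> M0 [s0 Ms0] Hlim s t nolead.
have n0 : (0 < n)%N by apply: leq_ltn_trans (ltn_ord s).
have [tau tauL] : exists tau : 'S_n, leading_diagonal M tau.
  exists (Order.arg_max (1%g : 'S_n) xpredT (diag_prod M)).
  by case: arg_maxP => // p _ Hp q; exact: Hp.
set PM := diag_prod M tau.
have PM0 : 0 < PM.
  apply: lt_le_trans (tauL s0); apply: prodr_gt0 => i _; exact: Ms0.
have notl : forall p : 'S_n, p s = t -> diag_prod M p < PM.
  move=> p ps; rewrite ltNge; apply/negP => le.
  apply: nolead; exists p; split => // q.
  exact: le_trans (tauL q) le.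
pose term (p : 'S_n) (lam : R) := powR (diag_prod M p) lam / powR PM lam.
pose g lam := \sum_(p : 'S_n | p s == t) term p lam.
have gcvg : g @ +oo --> (0 : R).
  have -> : (0 : R) = \sum_(p : 'S_n | p s == t) (0 : R) by rewrite big1.
  apply: (@cvg_big R 'S_n +%R 0 (fun p => p s == t) add_continuous R +oo
     (index_enum _) term (fun _ => 0)) => // p /eqP ps.
  apply: term_cvg; last exact: notl.
  by apply: prodr_ge0 => i _.
have bound : forall lam, 0 < lam -> forall eps, 0 < eps -> eps <= Mlim lam s t ->
    (eps / (n * n + 1)%:R) ^+ n <= g lam.
  move=> lam l0 eps e0 le.
  have [L0 Lr Lc Ld] := limit_facts (A := entry_pow lam M) (L := Mlim lam) (s0 := s0)
    (fun i j => ltac:(rewrite entry_powE //; exact: powR_ge0))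
    (fun i => ltac:(rewrite entry_powE //; apply: powR_gt0; exact: Ms0)) n0 (Hlim lam l0).
  have [p [ps pge]] := diag_match L0 Lr Lc (lt_le_trans e0 le).
  have np : 0 < (n * n + 1)%:R :> R by rewrite ltr0n; lia.
  apply: le_trans (_ : term p lam <= _).
    apply: le_trans (_ : diag_prod (Mlim lam) p <= _).
      apply: le_trans (_ : (Mlim lam s t / (n * n + 1)%:R) ^+ n <= _).
        apply: lerXn2r.
        - by rewrite nnegrE divr_ge0 // ltW.
        - by rewrite nnegrE divr_ge0 // ltW // (lt_le_trans e0 le).
        - by rewrite ler_pM2r ?invr_gt0.
      have -> : forall x : R, x ^+ n = \prod_(i < n) x.
        by move=> x; rewrite prodr_const card_ord.
      rewrite /diag_prod.
      by apply: ler_prod => i _; rewrite pge andbT divr_ge0 // ltW.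
    have := Ld p tau; rewrite !diag_powR // -/PM => e.
    have PMl : 0 < powR PM lam by apply: powR_gt0.
    rewrite /term ler_pdivlMr // e ler_piMl ?powR_ge0 //.
    apply: prodr_ile1 => i _; rewrite L0 /=.
    apply: le_trans (_ : \sum_j Mlim lam i j <= _).
      by rewrite (bigD1 (tau i)) //= lerDl sumr_ge0.
    by rewrite Lr invf_le1 ?ler1n ?ltr0n.
  rewrite /g (bigD1 p) ?ps ?eqxx //= lerDl; apply: sumr_ge0 => q _.
  by rewrite /term divr_ge0 ?powR_ge0.
apply/cvgrPdist_lt => eps e0.
set del := (eps / (n * n + 1)%:R) ^+ n.
have del0 : 0 < del by rewrite exprn_gt0 // divr_gt0 // ltr0n; lia.
move/cvgrPdist_lt: gcvg => /(_ _ del0) gnear.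
apply: filterS2 gnear (nbhs_pinfty_gt (real0 _)) => lam /= hg l0.
have [L0 _ _ _] := limit_facts (A := entry_pow lam M) (L := Mlim lam) (s0 := s0)
    (fun i j => ltac:(rewrite entry_powE //; exact: powR_ge0))
    (fun i => ltac:(rewrite entry_powE //; apply: powR_gt0; exact: Ms0)) n0 (Hlim lam l0).
rewrite sub0r normrN ger0_norm ?L0 //.
rewrite ltNge; apply/negP => le.
have := bound lam l0 eps e0 le.
have : g lam < del.
  by apply: le_lt_trans hg; rewrite sub0r normrN ler_norm.
rewrite -/del; lra.
Qed.
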